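(* Let $\delta_j,\delta_k$ be coprime integers with $1<\delta_j<\delta_k$, and let $(x_k,x_j)$ be a B\'ezout couple for $(\delta_k,\delta_j)$ associated to $i=x_k\delta_k+x_j\delta_j$ with $i\le\delta_j$. Then $\big(\lfloor\delta_k/\delta_j\rfloor x_k+x_j,\ x_k\big)$ is a B\'ezout couple for $(\delta_j,\ \delta_k\bmod\delta_j)$.
   Context: For coprime positive integers $p,q$, a B\'ezout couple for $(p,q)$ associated to $i\in\{1,\ldots,\max\{p,q\}\}$ is a pair $(x,y)\in\mathbb Z^2$ with $xp+yq=i$ and either $0<y\le p$ (the $\lambda$-B\'ezout couple of $i$, unique) or $0<x\le q$ (the $\mu$-B\'ezout couple of $i$, unique). Note $\delta_k\bmod\delta_j\ge1$ is coprime to $\delta_j$. *)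

(* Defs.v *)
From mathcomp Require Import all_boot all_order all_algebra.
Set Implicit Arguments. Unset Strict Implicit. Unset Printing Implicit Defensive.
Import Order.TTheory GRing.Theory Num.Theory.
Local Open Scope ring_scope.

Definition bezout_couple (p q i : nat) (x y : int) : Prop :=
  [/\ [&& (0 < p)%N, (0 < q)%N & coprime p q],
      (1 <= i <= maxn p q)%N,
      x * p%:Z + y * q%:Z = i%:Z
    & (((0 < y) && (y <= p%:Z)) \/ ((0 < x) && (x <= q%:Z)))].

(* Main.v *)
Require Import Defs.
From mathcomp Require Import all_boot all_order all_algebra.
From mathcomp Require Import zify ring.
Import Order.TTheory GRing.Theory Num.Theory.
Local Open Scope ring_scope.

Lemma mul_pos_monoZ (a b c : int) : 0 <= c -> a <= b -> a * c <= b * c.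
Proof. by move=> hc hab; rewrite ler_wpM2r. Qed.

Theorem lemma3p1 (dj dk : nat) (xk xj : int) (i : nat) :
  coprime dj dk -> (1 < dj)%N -> (dj < dk)%N ->
  bezout_couple dk dj i xk xj -> (i <= dj)%N ->
  bezout_couple dj (dk %% dj) i ((dk %/ dj)%:Z * xk + xj) xk.
Proof.
move=> cop hj hjk [_ /andP[i1 _] eq hc] hi.
have hr : (0 < dk %% dj)%N.
  rewrite lt0n; apply/negP => /eqP h0.
  have : (dj %| dk)%N by rewrite /dvdn h0.
  move=> d; move: cop; rewrite /coprime.
  by rewrite (gcdn_idPl d) => /eqP h; rewrite h in hj.
have hrl : (dk %% dj < dj)%N by rewrite ltn_mod; lia.
have hdk := divn_eq dk dj.
set q := (dk %/ dj)%N in hdk *; set r := (dk %% dj)%N in hr hrl hdk *.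
have eqZ : (dk%:Z = q%:Z * dj%:Z + r%:Z) by rewrite hdk PoszD PoszM.
have eq2 : (q%:Z * xk + xj) * dj%:Z + xk * r%:Z = i%:Z.
  by rewrite -eq eqZ; ring.
split.
- apply/and3P; split => //; first lia.
  by rewrite /coprime gcdn_modr.
- apply/andP; split => //; rewrite (maxn_idPl (ltnW hrl)) //.
- exact: eq2.
case: hc => /andP[h1 h2].
  2: by left; apply/andP; split.
move: eq eq2 eqZ h1 h2 hr hrl hi i1 hj hjk; set X := (q%:Z * xk + xj).
move: X => X. move: (q%:Z) => Q eq eq2 eqZ h1 h2 hr hrl hi i1 hj hjk.
have hr' : 1 <= r%:Z by lia.
have hrl' : r%:Z + 1 <= dj%:Z by lia.
have hi' : i%:Z <= dj%:Z by lia.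
have i1' : 1 <= i%:Z by lia.
have hk' : 1 <= dk%:Z by lia.
clear eqZ hdk hr hrl hi i1 hjk hj cop.
move: (dj%:Z) (dk%:Z) (r%:Z) (i%:Z) eq eq2 h2 hr' hrl' hi' i1' hk' => D K R I eq eq2 h2 hr hrl hi i1 hk.
have p1 : D <= xj * D by rewrite -[X in X <= _]mul1r; apply: mul_pos_monoZ; lia.
have p2 : xj * D <= K * D by apply: mul_pos_monoZ; lia.
have ha : xk <= 0.
  rewrite leNgt; apply/negP => hx.
  have : 1 * K <= xk * K by apply: mul_pos_monoZ; lia.
  lia.
have hlt : - xk <= D - 1.
  rewrite leNgt; apply/negP => hx.
  have : D * K <= (- xk) * K by apply: mul_pos_monoZ; lia.
  have : (- xk) * K = - (xk * K) by ring.
  have : D * K = K * D by ring.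
  lia.
have p3 : (- xk) * R <= (D - 1) * R by apply: mul_pos_monoZ; lia.
have p4 : 0 <= (- xk) * R by apply: mulr_ge0; lia.
have e3 : (- xk) * R = - (xk * R) by ring.
right; apply/andP; split.
  rewrite ltNge; apply/negP => hx.
  have : X * D <= 0 * D by apply: mul_pos_monoZ; lia.
  lia.
rewrite leNgt; apply/negP => hx.
have : (R + 1) * D <= X * D by apply: mul_pos_monoZ; lia.
have : (D - 1) * R = D * R - R by ring.
have : (R + 1) * D = D * R + D by ring.
lia.
Qed.
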